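(* Let $\gamma$ be a generator of $\mathbb{F}_{q^m}^*$ and let $\beta_1,\dots,\beta_m\in\mathbb{F}_{q^m}$ be linearly independent over $\mathbb{F}_q$. Let $n=(q-1)m$ and $1\le k\le n$. For $\ell\in\{0,1,\dots,q-2\}$ let $M_\ell$ be the $k\times m$ matrix over $\mathbb{F}_{q^m}$ with $(i,j)$ entry $\gamma^{\ell(1+q+\cdots+q^{i-1})}\beta_j^{q^i}$ for $i=0,\dots,k-1$, $j=1,\dots,m$ (row $i=0$ is $(\beta_1,\dots,\beta_m)$), and let $M=[M_0\,|\,M_1\,|\,\cdots\,|\,M_{q-2}]$ be the $k\times n$ matrix. Then for every nonzero $\lambda\in\mathbb{F}_{q^m}^k$, $\sum_{\ell=0}^{q-2}\mathrm{rk}_{\mathbb{F}_q}(\lambda^T M_\ell)\ge n-k+1$; i.e., $M$ generates a maximum sum-rank distance code with respect to the partition of $[n]$ into the $q-1$ blocks of size $m$ corresponding to $M_0,\dots,M_{q-2}$.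
   Context: Fix a basis of $\mathbb{F}_{q^m}$ over $\mathbb{F}_q$. For a row vector $z=(z_1,\dots,z_m)\in\mathbb{F}_{q^m}^m$, $\mathrm{rk}_{\mathbb{F}_q}(z)$ denotes the rank over $\mathbb{F}_q$ of the $m\times m$ matrix over $\mathbb{F}_q$ whose $j$-th column is the coordinate vector of $z_j$ in the fixed basis (this does not depend on the basis). *)

(* Defs.v *)
From HB Require Import structures.
From mathcomp Require Import all_boot all_order all_algebra all_field.
Set Implicit Arguments. Unset Strict Implicit. Unset Printing Implicit Defensive.
Import GRing.Theory.
Local Open Scope ring_scope.

(* F plays the role of F_q, L the role of F_{q^m} (a finite-dimensional
   extension of the finite field F).  The fixed F-basis of L is vbasis fullv. *)

Definition coord_mx (F : finFieldType) (L : fieldExtType F) (p : nat)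
  (z : 'rV[L]_p) : 'M[F]_(\dim {:L}, p) :=
  \matrix_(i < \dim {:L}, j < p) coord (vbasis {:L}) i (z ord0 j).

Definition rkFq (F : finFieldType) (L : fieldExtType F) (p : nat)
  (z : 'rV[L]_p) : nat := \rank (coord_mx z).

Definition Mblock (F : finFieldType) (L : fieldExtType F) (k m : nat)
  (gamma : L) (beta : 'I_m -> L) (l : nat) : 'M[L]_(k, m) :=
  \matrix_(i < k, j < m)
    (gamma ^+ (l * \sum_(t < i) #|F| ^ t)%N * beta j ^+ (#|F| ^ i)%N).

(* Main.v *)
Require Import Defs.
From HB Require Import structures.
From mathcomp Require Import all_boot all_order all_algebra all_field.
From mathcomp Require Import zify ring.
Set Implicit Arguments. Unset Strict Implicit. Unset Printing Implicit Defensive.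
Import GRing.Theory.
Local Open Scope ring_scope.
Section S.
Variables (F : finFieldType) (L : fieldExtType F).
Local Notation q := #|F|.

Lemma q_gt0 : (0 < q)%N. Proof. by apply/card_gt0P; exists 0. Qed.

Lemma frobD (x y : L) : (x + y) ^+ q = x ^+ q + y ^+ q.
Proof.
have [p _ pcharFp] := finPcharP F.
have pL : p \in [pchar L] by rewrite (pchar_lalg L).
rewrite (card_pprimeChar pcharFp).
elim: (logn _ _) => [|n IHn]; first by rewrite !expr1.
rewrite expnSr !exprM IHn.
rewrite -!(pFrobenius_autE pL).
by rewrite rmorphD.
Qed.
Lemma frobZ (c : F) (x : L) : (c *: x) ^+ q = c *: x ^+ q.
Proof.
have h : (c%:A : L) ^+ q = c%:A by rewrite -(in_algE L) -rmorphXn expf_card.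
by rewrite -[c *: x]mulr_algl -[c *: x ^+ q]mulr_algl exprMn h.
Qed.

Lemma frobnD j (x y : L) : (x + y) ^+ (q ^ j) = x ^+ (q ^ j) + y ^+ (q ^ j).
Proof. elim: j => [|j IH]; first by rewrite !expr1. by rewrite expnSr !exprM IH frobD. Qed.

Lemma frobnZ j (c : F) (x : L) : (c *: x) ^+ (q ^ j) = c *: x ^+ (q ^ j).
Proof. elim: j => [|j IH]; first by rewrite !expr1. by rewrite expnSr !exprM IH frobZ. Qed.

Lemma frobnN j (x : L) : (- x) ^+ (q ^ j) = - x ^+ (q ^ j).
Proof.
apply/eqP; rewrite -subr_eq0 opprK -frobnD addNr expr0n.
by rewrite expn_eq0 eqn0Ngt q_gt0.
Qed.

Definition Nrm (a : L) (i : nat) : L := a ^+ (\sum_(t < i) q ^ t)%N.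

Lemma Nrm0 a : Nrm a 0 = 1. Proof. by rewrite /Nrm big_ord0. Qed.

Lemma NrmS a i : Nrm a i.+1 = Nrm a i * a ^+ (q ^ i).
Proof. by rewrite /Nrm big_ord_recr /= exprD. Qed.

Lemma Nrm_conj a x i : Nrm (a * x ^+ (q - 1)) i * x = Nrm a i * x ^+ (q ^ i).
Proof.
elim: i => [|i IH]; first by rewrite !Nrm0 !mul1r.
rewrite !NrmS -mulrA [_ ^+ _ * x]mulrC mulrA IH exprMn -exprM.
rewrite -!mulrA; congr (_ * _); rewrite mulrC -mulrA -exprD; congr (_ * _).
congr (_ ^+ _); rewrite expnS; have := q_gt0; nia.
Qed.

End S.
Section S2.
Variables (F : finFieldType) (L : fieldExtType F).
Local Notation q := #|F|.

Definition Fop (a : L) (lam : nat -> L) (k : nat) (y : L) : L :=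
  \sum_(i < k) lam i * Nrm a i * y ^+ (q ^ i).

Lemma Fop_linear a lam k : linear (Fop a lam k).
Proof.
move=> c y z; rewrite /Fop scaler_sumr -big_split /=; apply: eq_bigr => i _.
by rewrite frobnD frobnZ mulrDr scalerAr.
Qed.

HB.instance Definition _ a lam k := GRing.isSemilinear.Build F L L _ (Fop a lam k)
  (GRing.semilinear_linear (Fop_linear a lam k)).

Definition Fl a lam k : 'End(L) := linfun (Fop a lam k).

Lemma FlE a lam k y : Fl a lam k y = Fop a lam k y.
Proof. by rewrite lfunE. Qed.

Lemma Fop_conj a lam k x :
  Fop a lam k x = (\sum_(i < k) lam i * Nrm (a * x ^+ (q - 1)) i) * x.
Proof.
rewrite /Fop mulr_suml; apply: eq_bigr => i _.
by rewrite -mulrA -Nrm_conj mulrA.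
Qed.

End S2.
Section S3.
Variables (F : finFieldType) (L : fieldExtType F).
Local Notation q := #|F|.

Lemma Nrm_neq0 (b : L) i : b != 0 -> Nrm b i != 0.
Proof. by move=> nb; rewrite /Nrm expf_neq0. Qed.

Lemma Nrm1 (b : L) : Nrm b 1 = b.
Proof. by rewrite NrmS Nrm0 mul1r expn0 expr1. Qed.

Definition mu_of (b : L) (lam : nat -> L) (k : nat) (j : nat) : L :=
  (\sum_(j.+1 <= i < k.+1) lam i * Nrm b i) / Nrm b j.+1.

Lemma mu_k (b : L) (lam : nat -> L) k : mu_of b lam k k = 0.
Proof. by rewrite /mu_of big_geq // mul0r. Qed.

Lemma mu_rec (b : L) (lam : nat -> L) k j : b != 0 -> (j < k)%N ->
  mu_of b lam k j = lam j.+1 + mu_of b lam k j.+1 * b ^+ (q ^ j.+1).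
Proof.
move=> nb ljk; rewrite /mu_of big_ltn ?ltnS // mulrDl mulfK ?Nrm_neq0 //.
by rewrite [Nrm b j.+2]NrmS invfM mulrA mulfVK // expf_neq0.
Qed.

Lemma mu_0 (b : L) (lam : nat -> L) k : b != 0 -> \sum_(i < k.+1) lam i * Nrm b i = 0 ->
  mu_of b lam k 0 * b = - lam 0.
Proof.
move=> nb hs; rewrite /mu_of Nrm1 mulfVK //.
move: hs; rewrite -(big_mkord xpredT (fun i => lam i * Nrm b i)) big_ltn //.
rewrite Nrm0 mulr1 => h; rewrite -(addKr (lam 0) (\sum_(1 <= i < k.+1) _)) h.
by rewrite addr0.
Qed.

Lemma Fop_factor (a b : L) lam mu k :
  mu k = 0 -> (forall j, (j < k)%N -> mu j = lam j.+1 + mu j.+1 * b ^+ (q ^ j.+1)) ->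
  mu 0 * b = - lam 0 ->
  forall y, Fop a lam k.+1 y = Fop a mu k (a * y ^+ q - b * y).
Proof.
move=> muk hrec h0 y.
pose G j := mu j * b ^+ (q ^ j) * Nrm a j * y ^+ (q ^ j).
pose H j := mu j * Nrm a j.+1 * y ^+ (q ^ j.+1).
have hG : \sum_(j < k) G j.+1 + G 0 = \sum_(j < k) G j.
  have e1 : \sum_(j < k.+1) G j = \sum_(j < k) G j + G k by rewrite big_ord_recr.
  have e2 : \sum_(j < k.+1) G j = G 0 + \sum_(j < k) G j.+1 by rewrite big_ord_recl.
  by rewrite addrC -e2 e1 {2}/G muk !mul0r addr0.
have -> : Fop a mu k (a * y ^+ q - b * y) = \sum_(j < k) (H j - G j).
  rewrite /Fop; apply: eq_bigr => j _.
  rewrite /H /G NrmS frobnD frobnN !exprMn -!exprM -expnS; ring.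
rewrite /Fop big_ord_recl /= Nrm0 expn0 expr1 mulr1.
have -> : lam 0 = - (mu 0 * b) by rewrite h0 opprK.
rewrite (eq_bigr (fun j : 'I_k => H j - G j.+1)); last first.
  move=> j _; rewrite /H /G (hrec j (ltn_ord j)) /=.
  rewrite /bump leq0n add1n.
  ring.
have -> : - (mu 0 * b) * y = - G 0 by rewrite /G /= Nrm0 expn0 !expr1 mulr1 mulNr.
rewrite !sumrB -hG; ring.
Qed.
End S3.
Section S4.
Variables (F : finFieldType) (L : fieldExtType F).
Local Notation q := #|F|.

Lemma q_gt1 : (1 < q)%N. Proof. exact: finNzRing_gt1. Qed.

Lemma frob_full (x : L) : x ^+ (q ^ \dim {:L}) = x.
Proof.
by have := Fermat's_little_theorem (aspacef L) x; rewrite memvf => /esym/eqP.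
Qed.

Lemma frob_fixed (x : L) : x ^+ q = x -> x \in 1%VS.
Proof.
move=> h; rewrite (Fermat's_little_theorem 1%AS x) /=.
by rewrite dimv1 expn1 h.
Qed.

Lemma card_L : #|finvect_type L| = (q ^ \dim {:L})%N.
Proof.
have h1 := @card_vspacef F (finvect_type L) (Vector.class _).
have h2 := @card_vspace F (finvect_type L) (Vector.class _) fullv.
by rewrite -h1 h2.
Qed.

Lemma dimL_gt0 : (0 < \dim {:L})%N.
Proof. exact: (adim_gt0 (aspacef L)). Qed.

Lemma qm_gt1 : (1 < q ^ \dim {:L})%N.
Proof. by rewrite -{1}(expn0 q) ltn_exp2l ?q_gt1 ?dimL_gt0. Qed.

Lemma dvd_q1 n : exists c, (q ^ n - 1 = c * (q - 1))%N.
Proof.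
elim: n => [|n [c hc]]; first by exists 0%N; rewrite expn0.
exists (q * c + 1)%N; have := q_gt1.
have : (0 < q ^ n)%N by rewrite expn_gt0 ltnW // q_gt1.
rewrite expnS; nia.
Qed.

Variable gamma : L.
Hypothesis gamma_gen : forall x : L, x != 0 -> exists e : nat, x = gamma ^+ e.
Hypothesis gamma_neq0 : gamma != 0.
Local Notation N := (q ^ \dim {:L} - 1)%N.

Lemma gamma_N : gamma ^+ N = 1.
Proof.
have h := frob_full gamma.
have e : (q ^ \dim {:L} = N.+1)%N by have := qm_gt1; lia.
rewrite e exprS in h; apply: (mulfI gamma_neq0); by rewrite h mulr1.
Qed.

Lemma gamma_ord j : gamma ^+ j = 1 -> (0 < j)%N -> (N <= j)%N.
Proof.
move=> hj j0.
pose T := finvect_type L.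
pose S := [set x : T | x != 0].
have hS : #|S| = N.
  have -> : S = [set~ (0 : T)] by apply/setP => x; rewrite !inE.
  by rewrite cardsC1 card_L subn1.
have sub : S \subset [set (gamma ^+ i : T) | i : 'I_j].
  apply/subsetP => x; rewrite inE => /gamma_gen [e ->].
  apply/imsetP; exists (Ordinal (ltn_pmod e j0)) => //=.
  rewrite {1}(divn_eq e j) exprD mulnC exprM hj expr1n mul1r //.
rewrite -hS; apply: leq_trans (subset_leq_card sub) _.
by apply: leq_trans (leq_imset_card _ _) _; rewrite card_ord.
Qed.

Lemma gamma_eq u v : gamma ^+ u = gamma ^+ v -> (u <= v)%N ->
  exists c, v = (u + c * (q - 1))%N.
Proof.
move=> huv le_uv.
have hd : gamma ^+ (v - u) = 1.
  apply: (mulfI (expf_neq0 u gamma_neq0)); rewrite -exprD subnKC // -huv mulr1 //.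
have hm : gamma ^+ ((v - u) %% N) = 1.
  by move: hd; rewrite {1}(divn_eq (v - u) N) exprD mulnC exprM gamma_N expr1n mul1r.
have N0 : (0 < N)%N by have := qm_gt1; lia.
have hz : ((v - u) %% N = 0)%N.
  apply/eqP; apply/negPn/negP; rewrite -lt0n => pos.
  have := gamma_ord hm pos; have := ltn_pmod (v - u) N0; lia.
have [c hc] := dvd_q1 (\dim {:L}).
exists ((v - u) %/ N * c)%N.
have := divn_eq (v - u) N; rewrite hz addn0 hc => e.
rewrite -mulnA -e; lia.
Qed.

Lemma class_eq (l l0 : nat) (x y : L) : (l < q - 1)%N -> (l0 < q - 1)%N ->
  x != 0 -> y != 0 -> gamma ^+ l * y ^+ (q - 1) = gamma ^+ l0 * x ^+ (q - 1) -> l = l0.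
Proof.
move=> hl hl0 /gamma_gen [ex ->] /gamma_gen [ey ->].
rewrite -!exprM -!exprD => h.
have key : forall a b : nat, (a < q - 1)%N -> (b < q - 1)%N ->
   (a %% (q - 1) = b %% (q - 1))%N -> a = b.
  by move=> a b ha hb; rewrite !modn_small.
apply: (key _ _ hl hl0).
have md : forall a e : nat, ((a + e * (q - 1)) %% (q - 1) = a %% (q - 1))%N.
  by move=> a e; rewrite addnC modnMDl.
case: (leqP (l + ey * (q - 1)) (l0 + ex * (q - 1))) => le.
  have [c hc] := gamma_eq h le.
  have : ((l0 + ex * (q - 1)) %% (q - 1) = (l + ey * (q - 1)) %% (q - 1))%N.
    by rewrite hc -addnA -mulnDl md.
  by rewrite !md.
have [c hc] := gamma_eq (esym h) (ltnW le).
have : ((l + ey * (q - 1)) %% (q - 1) = (l0 + ex * (q - 1)) %% (q - 1))%N.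
  by rewrite hc -addnA -mulnDl md.
by rewrite !md.
Qed.

End S4.
Section S5.
Variables (F : finFieldType) (L : fieldExtType F).
Local Notation q := #|F|.

Lemma q_pred : q = (q - 1).+1.
Proof. have := q_gt1 F; lia. Qed.

Lemma line_root (x y : L) : x != 0 -> y ^+ (q - 1) = x ^+ (q - 1) -> y \in <[x]>%VS.
Proof.
move=> nx h.
have hz : (y / x) ^+ q = y / x.
  by rewrite {1}q_pred exprS exprMn exprVn h mulfV ?expf_neq0 // mulr1.
have /vlineP [c hc] := frob_fixed hz.
apply/vlineP; exists c; by rewrite -(divfK nx y) hc -scalerAl mul1r.
Qed.

Definition lamH (b : L) (i : nat) : L :=
  if i == 0%N then - b else if i == 1%N then 1 else 0.

Lemma FopH (a b y : L) : Fop a (lamH b) 2 y = a * y ^+ q - b * y.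
Proof.
rewrite /Fop !big_ord_recl big_ord0 /= /lamH /= Nrm0 Nrm1 expn0 expn1 expr1.
rewrite /bump /=; ring.
Qed.

Lemma dim_ker_comp (g h : 'End(L)) :
  (\dim (lker (g \o h)%VF) <= \dim (lker g) + \dim (lker h))%N.
Proof.
have e1 := limg_ker_dim (g \o h)%VF fullv.
have e2 := limg_ker_dim h fullv.
have e3 := limg_ker_dim g (h @: fullv).
rewrite limg_comp capvC capvf in e1; rewrite capvC capvf in e2.
have : (\dim (h @: fullv :&: lker g) <= \dim (lker g))%N by apply: dimvS; apply: capvSr.
lia.
Qed.

Lemma ker_root (a b y : L) : y \in lker (Fl a (lamH b) 2) -> y != 0 ->
  a * y ^+ (q - 1) = b.
Proof.
rewrite memv_ker FlE FopH subr_eq0 => /eqP h ny.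
by apply: (mulIf ny); rewrite -mulrA -exprSr -q_pred.
Qed.

Variable gamma : L.
Hypothesis gamma_gen : forall x : L, x != 0 -> exists e : nat, x = gamma ^+ e.
Hypothesis gamma_neq0 : gamma != 0.

Lemma kerH_bound (l l0 : 'I_(q - 1)) (x : L) : x != 0 ->
  (\dim (lker (Fl (gamma ^+ l) (lamH (gamma ^+ l0 * x ^+ (q - 1))) 2)) <= (l == l0))%N.
Proof.
move=> nx; case: (l =P l0) => [-> | ne].
  apply: leq_trans (dimvS (_ : _ <= <[x]>)%VS) _; last by rewrite dim_vline nx.
  apply/subvP => y hy.
  have [-> | ny] := eqVneq y 0; first exact: mem0v.
  apply: line_root => //; apply: (mulfI (expf_neq0 l0 gamma_neq0)).
  exact: ker_root hy ny.
rewrite leqn0 dimv_eq0 -subv0; apply/subvP => y hy; rewrite memv0.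
apply/negPn/negP => ny; apply: ne; apply: val_inj => /=.
exact: (class_eq gamma_gen gamma_neq0 (ltn_ord l) (ltn_ord l0) nx ny (ker_root hy ny)).
Qed.

End S5.
Section S6.
Variables (F : finFieldType) (L : fieldExtType F).
Local Notation q := #|F|.
Variable gamma : L.
Hypothesis gamma_gen : forall x : L, x != 0 -> exists e : nat, x = gamma ^+ e.
Hypothesis gamma_neq0 : gamma != 0.

Lemma ker_bound k : forall lam : nat -> L, (exists2 i, (i < k)%N & lam i != 0) ->
  (\sum_(l < q - 1) \dim (lker (Fl (gamma ^+ l) lam k)) <= k.-1)%N.
Proof.
elim: k => [|k IH] lam [i0 hi0 hnz]; first by rewrite ltn0 in hi0.
case: (boolP [exists l : 'I_(q - 1), \dim (lker (Fl (gamma ^+ l) lam k.+1)) != 0%N]);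
  last first.
  move/existsPn => hall; rewrite big1 // => l _.
  by have /negPn/eqP := hall l.
case/existsP => l0 hl0.
set x := vpick (lker (Fl (gamma ^+ l0) lam k.+1)).
have hx : x \in lker (Fl (gamma ^+ l0) lam k.+1) := memv_pick _.
have nx : x != 0 by rewrite vpick0 -dimv_eq0.
set b := gamma ^+ l0 * x ^+ (q - 1).
have nb : b != 0 by rewrite mulf_neq0 ?expf_neq0.
have hsum : \sum_(i < k.+1) lam i * Nrm b i = 0.
  move: hx; rewrite memv_ker FlE Fop_conj mulf_eq0 (negbTE nx) orbF.
  by move/eqP.
set mu := mu_of b lam k.
have hfac : forall a y, Fop a lam k.+1 y = Fop a mu k (a * y ^+ q - b * y).
  move=> a y; apply: Fop_factor.
  - exact: mu_k.
  - by move=> j hj; apply: mu_rec.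
  - exact: mu_0.
have [j0 hj0 hmu] : exists2 j, (j < k)%N & mu j != 0.
  case: (boolP [exists j : 'I_k, mu j != 0]) => [/existsP [j hj] | /existsPn hall].
    by exists j.
  have muz : forall j, (j <= k)%N -> mu j = 0.
    move=> j; rewrite leq_eqVlt => /orP [/eqP -> | hj]; first exact: mu_k.
    by have /negPn/eqP := hall (Ordinal hj).
  exfalso; move: hnz; case: i0 hi0 => [|j] hj.
    have e : mu 0 * b = - lam 0 := mu_0 nb hsum; rewrite (muz 0%N) // mul0r in e.
    by move/eqP: e; rewrite eq_sym oppr_eq0 => /eqP ->; rewrite eqxx.
  have hjk : (j < k)%N := hj.
  have e2 : mu j = lam j.+1 + mu j.+1 * b ^+ (q ^ j.+1) := mu_rec (k:=k) (j:=j) lam nb hjk.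
  rewrite (muz j (ltnW hjk)) (muz j.+1 hjk) mul0r addr0 in e2.
  by rewrite -e2 eqxx.
have IHmu := IH mu (ex_intro2 _ _ j0 hj0 hmu).
have hl : forall l : 'I_(q - 1), (\dim (lker (Fl (gamma ^+ l) lam k.+1)) <=
    \dim (lker (Fl (gamma ^+ l) mu k)) + (l == l0))%N.
  move=> l.
  have -> : Fl (gamma ^+ l) lam k.+1 = (Fl (gamma ^+ l) mu k \o Fl (gamma ^+ l) (lamH b) 2)%VF.
    by apply/lfunP => y; rewrite comp_lfunE !FlE FopH hfac.
  apply: leq_trans (dim_ker_comp _ _) _; rewrite leq_add2l.
  exact: kerH_bound.
have hs : (\sum_(l < q - 1) \dim (lker (Fl (gamma ^+ l) lam k.+1)) <=
   \sum_(l < q - 1) (\dim (lker (Fl (gamma ^+ l) mu k)) + (l == l0)))%N.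
  by apply: leq_sum => l _; exact: hl.
apply: leq_trans hs _.
have h1 : (\sum_(i < q - 1) (i == l0) = 1)%N.
  by rewrite (bigD1 l0) //= eqxx big1 // => i /negPf ->.
rewrite big_split /= h1.
have : (0 < k)%N by apply: leq_ltn_trans hj0.
move: IHmu; rewrite -subn1 => h hk.
apply: leq_trans (leq_add h (leqnn 1)) _; by rewrite subnK.
Qed.

End S6.
Section S7.
Variables (F : finFieldType) (L : fieldExtType F).
Local Notation q := #|F|.

Lemma rank_span p (z : 'rV[L]_p) :
  (\dim <<[seq z ord0 j | j <- enum 'I_p]>> <= rkFq z)%N.
Proof.
set A := coord_mx z.
pose e := vbasis {:L}.
pose B := row_base A^T.
pose w := [seq (\sum_(i < \dim {:L}) B t i *: e`_i) | t <- enum 'I_(\rank A^T)].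
have hsub : (<<[seq z ord0 j | j <- enum 'I_p]>> <= <<w>>)%VS.
  apply/span_subvP => _ /mapP [j _ ->].
  have hrow : (row j A^T <= B)%MS by rewrite eq_row_base row_sub.
  have [u hu] := submxP hrow.
  have -> : z ord0 j = \sum_(t < \rank A^T) u ord0 t *: (\sum_i B t i *: e`_i).
    rewrite {1}(coord_vbasis (memvf (z ord0 j))).
    rewrite (eq_bigr (fun i => (\sum_t u ord0 t * B t i) *: e`_i)); last first.
      move=> i _; have := congr1 (fun M : 'M[F]_(1, \dim {:L}) => M ord0 i) hu; rewrite !mxE => <-.
      by [].
    rewrite (eq_bigr (fun i => \sum_t (u ord0 t * B t i) *: e`_i)); last first.
      by move=> i _; rewrite scaler_suml.
    rewrite exchange_big /=; apply: eq_bigr => t _.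
    by rewrite scaler_sumr; apply: eq_bigr => i _; rewrite scalerA.
  apply: rpred_sum => t _; apply: rpredZ; apply: memv_span; apply: map_f.
  exact: mem_enum.
apply: leq_trans (dimvS hsub) _; apply: leq_trans (dim_span w) _.
by rewrite size_map size_enum_ord /rkFq mxrank_tr.
Qed.

End S7.
Lemma main_nz (F : finFieldType) (L : fieldExtType F) (m k : nat)
  (gamma : L) (beta : 'I_m -> L) :
  \dim {:L} = m ->
  (forall x : L, x != 0 -> exists e : nat, x = gamma ^+ e) ->
  gamma != 0 ->
  free [seq beta j | j <- enum 'I_m] ->
  (1 <= k <= (#|F| - 1) * m)%N ->
  forall lambda : 'rV[L]_k, lambda != 0 ->
    ((#|F| - 1) * m - k + 1 <=
      \sum_(l < #|F| - 1) rkFq (lambda *m Mblock k gamma beta l))%N.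
Proof.
move=> hm hgen hnz hfree /andP [k1 kn] lambda hl.
case: k lambda k1 kn hl => // k lambda _ kn hl.
pose lam (i : nat) : L := lambda ord0 (inord i).
have lamE : forall i : 'I_k.+1, lam i = lambda ord0 i.
  by move=> i; rewrite /lam inord_val.
have [j0 hj0] : exists j, lambda ord0 j != 0.
  case: (boolP [exists j, lambda ord0 j != 0]) => [/existsP [j hj] | /existsPn hall].
    by exists j.
  case/eqP: hl; apply/rowP => j; rewrite mxE.
  by have /negPn/eqP := hall j.
have hex : exists2 i, (i < k.+1)%N & lam i != 0.
  by exists (val j0); [exact: ltn_ord | rewrite lamE].
have KB := ker_bound hgen hnz hex.
have hspan : <<[seq beta j | j <- enum 'I_m]>>%VS = fullv.
  apply/eqP; rewrite eqEdim subvf /=.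
  by move: hfree; rewrite /free => /eqP ->; rewrite size_map size_enum_ord hm.
have hrk : forall l : 'I_(#|F| - 1), (m <= rkFq (lambda *m Mblock k.+1 gamma beta l)
    + \dim (lker (Fl (gamma ^+ l) lam k.+1)))%N.
  move=> l; set f := Fl (gamma ^+ l) lam k.+1.
  have hz : [seq (lambda *m Mblock k.+1 gamma beta l) ord0 j | j <- enum 'I_m] =
            [seq f i | i <- [seq beta j | j <- enum 'I_m]].
    rewrite -(map_comp f beta); apply: eq_map => j /=.
    rewrite FlE /Fop !mxE; apply: eq_bigr => i _.
    by rewrite mxE lamE /Nrm -exprM mulrA.
  have := rank_span (lambda *m Mblock k.+1 gamma beta l); rewrite hz -limg_span hspan.
  have := limg_ker_dim f fullv; rewrite capvC capvf hm; lia.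
have hsum : ((#|F| - 1) * m <= \sum_(l < #|F| - 1) rkFq (lambda *m Mblock k.+1 gamma beta l)
     + \sum_(l < #|F| - 1) \dim (lker (Fl (gamma ^+ l) lam k.+1)))%N.
  rewrite -big_split /=.
  have <- : (\sum_(l < #|F| - 1) m = (#|F| - 1) * m)%N by rewrite sum_nat_const card_ord.
  by apply: leq_sum => l _; exact: hrk l.
move: KB hsum kn.
set S1 := \sum_(l < _) rkFq _.
set S2 := \sum_(l < _) \dim _.
set n := ((#|F| - 1) * m)%N.
move=> /= *; lia.
Qed.
Unset Implicit Arguments.
Theorem theoremF2 (F : finFieldType) (L : fieldExtType F) (m k : nat)
  (gamma : L) (beta : 'I_m -> L) :
  \dim {:L} = m ->
  (* gamma generates the multiplicative group L^* *)
  (forall x : L, x != 0 -> exists e : nat, x = gamma ^+ e) ->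
  (* beta_1, ..., beta_m are linearly independent over F *)
  free [seq beta j | j <- enum 'I_m] ->
  (1 <= k <= (#|F| - 1) * m)%N ->
  forall lambda : 'rV[L]_k, lambda != 0 ->
    ((#|F| - 1) * m - k + 1 <=
      \sum_(l < #|F| - 1) rkFq (lambda *m Mblock k gamma beta l))%N.
Proof.
move=> hm hgen hfree hk lambda hl.
have [g0 | gnz] := eqVneq gamma 0; last exact: main_nz.
have q2 : (#|F| <= 2)%N.
  have sub : [set: F] \subset [set 0; 1].
    apply/subsetP => c _; rewrite !inE.
    have [-> | nc] := eqVneq c 0; first by apply/orP; left.
    have ncA : (c%:A : L) != 0 by rewrite scaler_eq0 oner_eq0 orbF.
    have [e he] := hgen _ ncA.
    case: e he => [|e] h; last first.
      by move: ncA; rewrite h g0 expr0n /= eqxx.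
    rewrite expr0 -in_algE in h; move/eqP: h; rewrite fmorph_eq1 => ->.
    by rewrite orbT.
  rewrite -cardsT; apply: leq_trans (subset_leq_card sub) _.
  by rewrite cards2; case: (_ != _).
have hgen1 : forall x : L, x != 0 -> exists e : nat, x = 1 ^+ e.
  move=> x nx; have [e he] := hgen x nx; exists 0%N; rewrite expr0.
  case: e he => [|e] he; first by rewrite he expr0.
  by move: nx; rewrite he g0 expr0n /= eqxx.
have := main_nz hm hgen1 (oner_neq0 _) hfree hk hl.
congr (_ <= _)%N; apply: eq_bigr => l _; congr rkFq; congr (_ *m _).
apply/matrixP => i j; rewrite !mxE.
have -> : nat_of_ord l = 0%N by have := ltn_ord l; lia.
by rewrite !mul0n !expr0.
Qed.
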